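(* There is an absolute constant $C>0$ with the following property. Let $(\Omega,\mu)$ be a metric space, $\mathcal D$ a distribution on $\Omega$, $\tau\ge0$, $\sigma(\mathbf{x},\mathbf{y})=\mathbb{1}[\mu(\mathbf{x},\mathbf{y})\le\tau]$, and $p=\mathbf{P}_{\mathbf{x},\mathbf{y}\text{ iid }\mathcal D}[\mu(\mathbf{x},\mathbf{y})\le\tau]$ with $1/n\le p\le1/2$ (all of these may depend on $n$). Suppose $\Omega$ has a finite $\varepsilon$-net $\mathcal N(\varepsilon)$ such that $\mathbf{P}_{\mathbf{x},\mathbf{y}\text{ iid }\mathcal D}\big[\mu(\mathbf{x},\mathbf{y})\in[\tau-2\varepsilon,\tau+2\varepsilon]\big]=o(n^{-2})$ and $|\mathcal N(\varepsilon)|\le\exp(C\,np\log(1/p))$. Then $$\mathsf{TV}\Big(\mathsf{RGG}(n,\Omega,\mathcal D,\sigma,p),\ \mathsf{G}(n,p)\Big)=1-o(1).$$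
   Context: An $\varepsilon$-net $\mathcal N(\varepsilon)\subseteq\Omega$ is a set such that every point of $\Omega$ is at $\mu$-distance at most $\varepsilon$ from some point of $\mathcal N(\varepsilon)$. $\mathsf{RGG}(n,\Omega,\mathcal D,\sigma,p)$: sample $\mathbf{x}^1,\dots,\mathbf{x}^n$ iid from $\mathcal D$ and join $i,j$ iff $\mu(\mathbf{x}^i,\mathbf{x}^j)\le\tau$. $\mathsf{G}(n,p)$ is Erdős–Rényi. Asymptotics are as $n\to\infty$. *)

(* Defs.v *)
From HB Require Import structures.
From mathcomp Require Import all_boot all_order all_algebra.
From mathcomp Require Import all_classical all_reals all_analysis.
From mathcomp Require Import Rstruct Rstruct_topology.
Set Implicit Arguments. Unset Strict Implicit. Unset Printing Implicit Defensive.
Import Order.TTheory GRing.Theory Num.Theory.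
Local Open Scope classical_set_scope.
Local Open Scope ring_scope.

Section Defs.
Variable R : realType.

Definition is_metric (T : Type) (mu : T -> T -> R) : Prop :=
  [/\ (forall x y, 0 <= mu x y),
      (forall x y, mu x y = 0 <-> x = y),
      (forall x y, mu x y = mu y x) &
      (forall x y z, mu x z <= mu x y + mu y z)].

Definition measurable_dist d (T : measurableType d) (mu : T -> T -> R) : Prop :=
  measurable_fun [set: T * T] (fun z : T * T => mu z.1 z.2).

(* N (a finite list of points) is an eps-net of Omega for mu;
   its cardinality is bounded by size N *)
Definition is_eps_net (T : Type) (mu : T -> T -> R) (eps : R) (N : seq T) : Prop :=
  forall x : T, exists y, List.In y N /\ mu x y <= eps.

Definition edge_prob d (T : measurableType d) (D : probability T R)
  (mu : T -> T -> R) (tau : R) : R :=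
  fine ((D \x D)%E [set z : T * T | mu z.1 z.2 <= tau]).

Definition band_prob d (T : measurableType d) (D : probability T R)
  (mu : T -> T -> R) (tau eps : R) : R :=
  fine ((D \x D)%E [set z : T * T | (tau - 2 * eps <= mu z.1 z.2)
                                     && (mu z.1 z.2 <= tau + 2 * eps)]).

Definition iid_sample d d' (T : measurableType d) (Om : measurableType d')
  (P : probability T R) (D : probability Om R) (n : nat)
  (X : 'I_n -> T -> Om) : Prop :=
  [/\ (forall i, measurable_fun setT (X i)),
      (forall i (A : set Om), measurable A -> P (X i @^-1` A) = D A) &
      (forall A : 'I_n -> set Om, (forall i, measurable (A i)) ->
         P (\bigcap_(i in [set: 'I_n]) (X i @^-1` A i))
         = (\prod_(i < n) fine (P (X i @^-1` A i)))%:E)].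

(* Simple graphs on vertex set 'I_n are encoded by their edge sets, i.e.
   sets of 2-element subsets of 'I_n. *)
Definition all_pairs (n : nat) : {set {set 'I_n}} := [set e : {set 'I_n} | #|e| == 2%N]%SET.

Definition rgg_graph (T : Type) (mu : T -> T -> R) (tau : R) (n : nat)
  (x : 'I_n -> T) : {set {set 'I_n}} :=
  [set e : {set 'I_n} | [exists i : 'I_n, exists j : 'I_n,
     [&& (i < j)%N, e == [set i; j]%SET & mu (x i) (x j) <= tau]]]%SET.

Definition rgg_pmf d d' (T : measurableType d) (Om : measurableType d')
  (P : probability T R) (mu : Om -> Om -> R) (tau : R) (n : nat)
  (X : 'I_n -> T -> Om) (g : {set {set 'I_n}}) : R :=
  fine (P [set t | rgg_graph mu tau (fun i => X i t) = g]).

Definition gnp_pmf (n : nat) (p : R) (g : {set {set 'I_n}}) : R :=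
  if g \subset all_pairs n then p ^+ #|g| * (1 - p) ^+ ('C(n, 2) - #|g|)
  else 0.

Definition TV (n : nat) (f h : {set {set 'I_n}} -> R) : R :=
  2^-1 * \sum_(g : {set {set 'I_n}}) `|f g - h g|.

End Defs.
Arguments gnp_pmf {R} n p g.

(* Main.v *)
Require Import Defs.
From HB Require Import structures.
From mathcomp Require Import all_boot all_order all_algebra.
From mathcomp Require Import all_classical all_reals all_analysis.
From mathcomp Require Import Rstruct Rstruct_topology.
From Stdlib Require Import Lia.
From mathcomp Require Import zify ring lra.
Import Order.TTheory GRing.Theory Num.Theory.
Local Open Scope classical_set_scope.
Local Open Scope ring_scope.
Section Comb.
Variable R : realType.

Lemma sum_subsets_card (T : finType) (A : {set T}) (F : nat -> R) :
  \sum_(g : {set T} | g \subset A) F #|g| = \sum_(k < #|A|.+1) 'C(#|A|, k)%:R * F k.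
Proof.
rewrite (partition_big (fun g : {set T} => inord #|g| : 'I_#|A|.+1) xpredT) //=.
apply: eq_bigr => k _.
transitivity (\sum_(g in [set g : {set T} | g \subset A & #|g| == k]) F k).
  apply: eq_big => g; last first.
    move=> /andP[gA /eqP kE]; rewrite -kE inordK // ltnS subset_leq_card //.
  rewrite inE; apply/andP/andP => -[gA /eqP kE]; split => //.
    by rewrite -kE inordK // ltnS subset_leq_card.
  by apply/eqP/val_inj; rewrite /= -kE inordK // ltnS subset_leq_card.
by rewrite sumr_const cards_draws mulr_natl.
Qed.

Lemma card_all_pairs n : #|all_pairs n| = 'C(n, 2).
Proof. by rewrite /all_pairs card_draws card_ord. Qed.

Lemma gnp_sumw n (p w : R) :
  \sum_(g : {set {set 'I_n}}) gnp_pmf n p g * w ^+ #|g| = (p * w + (1 - p)) ^+ 'C(n, 2).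
Proof.
rewrite (bigID (fun g : {set {set 'I_n}} => g \subset all_pairs n)) /=.
rewrite [X in _ + X]big1 ?addr0; last first.
  by move=> g /negbTE gA; rewrite /gnp_pmf gA mul0r.
rewrite (eq_bigr (fun g : {set {set 'I_n}} => (fun k => (p * w) ^+ k * (1 - p) ^+ (#|all_pairs n| - k)) #|g|)); last first.
  by move=> g gA; rewrite /gnp_pmf gA card_all_pairs exprMn mulrAC.
have := @sum_subsets_card _ (all_pairs n) (fun k => (p * w) ^+ k * (1 - p) ^+ (#|all_pairs n| - k)).
move=> /= ->; rewrite card_all_pairs [p * w + _]addrC exprDn.
by apply: eq_bigr => k _; rewrite mulr_natl mulrC.
Qed.

Lemma exprE (x : R) m : 0 < x -> x ^+ m = expR (m%:R * ln x).
Proof. by move=> x0; rewrite expRM_natl lnK // posrE. Qed.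

Lemma gnp_ge0 n (p : R) g : 0 <= p <= 1 -> 0 <= gnp_pmf n p g.
Proof.
move=> /andP[p0 p1]; rewrite /gnp_pmf; case: ifP => // _.
by rewrite mulr_ge0 // exprn_ge0 // subr_ge0.
Qed.

Lemma gnp_le n (p k : R) g : 0 < p -> p <= 2^-1 ->
  gnp_pmf n p g <= (1 - p) ^+ 'C(n, 2) * expR (k * ln (p / (1 - p)))
                   + expR (k * ln 2) * (gnp_pmf n p g * 2^-1 ^+ #|g|).
Proof.
move=> p0 ph.
have q0 : 0 < 1 - p by rewrite subr_gt0 (le_lt_trans ph) // invf_lt1 // ltr1n.
have qp : p <= 1 - p.
  by rewrite lerBrDr -mulr2n -mulr_natr -ler_pdivlMr // ?ltr0n // div1r.
have pq0 : 0 < p / (1 - p) by rewrite divr_gt0.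
have hge : 0 <= gnp_pmf n p g by apply: gnp_ge0; rewrite ltW //= (le_trans ph) // invf_le1 // ler1n.
have U0 : 0 <= (1 - p) ^+ 'C(n, 2) * expR (k * ln (p / (1 - p))).
  by rewrite mulr_ge0 // ?exprn_ge0 ?ltW // expR_ge0.
have V0 : 0 <= expR (k * ln 2) * (gnp_pmf n p g * 2^-1 ^+ #|g|).
  by rewrite mulr_ge0 ?expR_ge0 // mulr_ge0 // exprn_ge0 // invr_ge0 ler0n.
rewrite /gnp_pmf; case: ifP => gA; last by rewrite !mul0r mulr0 addr0 U0.
set m := #|g|.
have mN : (m <= 'C(n, 2))%N by rewrite -card_all_pairs subset_leq_card.
have [km | mk] := leP k m%:R.
  apply: ler_wpDr; first by rewrite -/(gnp_pmf n p g) /gnp_pmf gA -/m in V0.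
  have -> : p ^+ m * (1 - p) ^+ ('C(n, 2) - m) = (1 - p) ^+ 'C(n, 2) * (p / (1 - p)) ^+ m.
    rewrite -{2}(subnK mN) exprD expr_div_n.
    have qm : (1 - p) ^+ m != 0 by rewrite expf_neq0 // gt_eqF.
    by rewrite mulrACA mulfV // mulr1 mulrC.
  apply: ler_wpM2l; first by rewrite exprn_ge0 // ltW.
  rewrite exprE // ler_expR ler_wnM2r //.
  by rewrite ln_le0 // ler_pdivrMr // mul1r.
apply: ler_wpDl => //.
have h0 : 0 <= p ^+ m * (1 - p) ^+ ('C(n, 2) - m).
  by rewrite mulr_ge0 // exprn_ge0 // ltW.
rewrite mulrCA -[X in X <= _]mulr1 ler_wpM2l //.
rewrite exprVn exprE ?ltr0n // ler_pdivlMr ?expR_gt0 // mul1r ler_expR.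
apply: ler_wpM2r; [by apply: ln_ge0; rewrite ler1n | exact: ltW].
Qed.
Lemma gnp_sum1 n (p : R) : \sum_(g : {set {set 'I_n}}) gnp_pmf n p g = 1.
Proof.
have := gnp_sumw n p 1; rewrite mulr1 addrC subrK expr1n => <-.
by apply: eq_bigr => g _; rewrite expr1n mulr1.
Qed.

Lemma gnp_setS n (p k : R) (S : {set {set {set 'I_n}}}) : 0 < p -> p <= 2^-1 ->
  \sum_(g in S) gnp_pmf n p g <=
   #|S|%:R * ((1 - p) ^+ 'C(n, 2) * expR (k * ln (p / (1 - p))))
   + expR (k * ln 2) * (1 - p / 2) ^+ 'C(n, 2).
Proof.
move=> p0 ph.
apply: le_trans; first by apply: ler_sum => g _; exact: (@gnp_le n p k g p0 ph).
rewrite big_split /= sumr_const mulr_natl lerD2l -mulr_sumr.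
apply: ler_wpM2l; first exact: expR_ge0.
have -> : 1 - p / 2 = p * 2^-1 + (1 - p) by field.
rewrite -gnp_sumw.
rewrite [X in _ <= X](bigID (mem S)) /= lerDl sumr_ge0 // => g _.
rewrite mulr_ge0 ?exprn_ge0 ?invr_ge0 ?ler0n // gnp_ge0 // ltW //= (le_trans ph) //.
by rewrite invf_le1 // ler1n.
Qed.
Lemma expRN_le (y : R) : 0 < y -> expR (- y) <= y^-1.
Proof.
move=> y0; rewrite expRN lef_pV2 ?posrE ?expR_gt0 //.
by apply: le_trans (expR_ge1Dx y); rewrite lerDr.
Qed.

Lemma ln2_ge : 2^-1 <= ln (2 : R).
Proof.
have h := expR_ge1Dx (ln (2^-1 : R)).
rewrite lnK ?posrE ?invr_gt0 ?ltr0n // in h.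
rewrite lnV ?posrE ?ltr0n // in h.
lra.
Qed.

Lemma ln2_le : ln (2 : R) <= 1.
Proof. by have := @le_ln1Dx R 1; rewrite -[1 + 1]/(2%:R : R); apply; lra. Qed.

Lemma asym_real (x N2 p S : R) : 2 <= x -> x ^+ 2 <= 4 * N2 -> x^-1 <= p -> p <= 2^-1 ->
  0 <= S -> S <= expR (x * (32^-1 * x * p * ln p^-1)) ->
  S * (expR (N2 * ln (1 - p)) * expR (N2 * p / 4 * ln (p / (1 - p))))
  + expR (N2 * p / 4 * ln 2) * expR (N2 * ln (1 - p / 2)) <= 80 / x.
Proof.
move=> x2 xN xp ph S0 Sle.
have x0 : 0 < x by lra.
have p0 : 0 < p by apply: lt_le_trans xp; rewrite invr_gt0.
have q0 : 0 < 1 - p by lra.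
have xp1 : 1 <= x * p by rewrite -(mulfV (lt0r_neq0 x0)) ler_wpM2l // ltW.
set L := ln p^-1.
have L0 : 2^-1 <= L.
  apply: le_trans ln2_ge _; rewrite ler_ln ?posrE ?invr_gt0 ?ltr0n //.
  by rewrite -[2 : R]invrK lef_pV2 ?posrE ?invr_gt0 ?ltr0n.
have lnq : ln (1 - p) <= 0 by apply: ln_le0; lra.
have lnpq : ln (p / (1 - p)) = - L - ln (1 - p).
  rewrite lnM ?posrE ?invr_gt0 // lnV ?posrE // /L lnV ?posrE //; lra.
have N0 : 0 <= N2 by nra.
have T1 : S * (expR (N2 * ln (1 - p)) * expR (N2 * p / 4 * ln (p / (1 - p)))) <= 64 / x.
  apply: le_trans (ler_wpM2r _ Sle) _; first by rewrite mulr_ge0 // expR_ge0.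
  rewrite -!exp.expRD.
  apply: le_trans (_ : expR (- (x / 64)) <= _).
    rewrite ler_expR lnpq.
    have hb : N2 * ln (1 - p) <= 0 by nra.
    have h1 : N2 * ln (1 - p) + N2 * p / 4 * (- ln (1 - p)) <= 0.
      have -> : N2 * ln (1 - p) + N2 * p / 4 * (- ln (1 - p)) = (N2 * ln (1 - p)) * (1 - p / 4) by ring.
      by apply: mulr_le0_ge0 => //; lra.
    have h2a : x * p * L >= 2^-1 by nra.
    have h2 : x * x * p * L >= x / 2 by nra.
    have pL0 : 0 <= p * L by nra.
    have h3 : N2 * (p * L) >= x ^+ 2 / 4 * (p * L).
      by apply: ler_wpM2r => //; lra.
    rewrite expr2 in h3.
    rewrite -/L; lra.
  have hc : 0 < x / 64 by lra.
  by apply: le_trans (expRN_le _ hc) _; rewrite invf_div.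
have T2 : expR (N2 * p / 4 * ln 2) * expR (N2 * ln (1 - p / 2)) <= 16 / x.
  rewrite -exp.expRD.
  apply: le_trans (_ : expR (- (x / 16)) <= _).
    rewrite ler_expR.
    have h1 : ln (1 - p / 2) <= - (p / 2).
      have := @le_ln1Dx R (- (p / 2)); rewrite addrC => -> //; lra.
    have h2 : ln (2 : R) <= 1 := ln2_le.
    have h3 : N2 * p >= x / 4 by nra.
    nra.
  have hc : 0 < x / 16 by lra.
  by apply: le_trans (expRN_le _ hc) _; rewrite invf_div.
lra.
Qed.

Lemma tv_bounds n (f h : {set {set 'I_n}} -> R) (S : {set {set {set 'I_n}}}) :
  (forall g, 0 <= f g) -> (forall A : {set {set {set 'I_n}}}, \sum_(g in A) f g <= 1) ->
  (forall g, 0 <= h g) -> \sum_(g : {set {set 'I_n}}) h g = 1 ->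
  \sum_(g in S) f g - \sum_(g in S) h g <= TV f h <= 1.
Proof.
move=> f0 f1 h0 h1.
have fall : \sum_(g : {set {set 'I_n}}) f g <= 1.
  by apply: le_trans (f1 [set: {set {set 'I_n}}]%SET); rewrite le_eqVlt; apply/orP; left; apply/eqP; apply: eq_bigl => g; rewrite !inE.
have [fS fN] : \sum_(g : {set {set 'I_n}}) f g = \sum_(g in S) f g + \sum_(g | g \notin S) f g
   /\ \sum_(g : {set {set 'I_n}}) h g = \sum_(g in S) h g + \sum_(g | g \notin S) h g.
  by split; rewrite (bigID (mem S)).
have aS : \sum_(g in S) f g - \sum_(g in S) h g <= \sum_(g in S) `|f g - h g|.
  rewrite -sumrB; apply: ler_sum => g _; exact: ler_norm.
have aN : \sum_(g | g \notin S) h g - \sum_(g | g \notin S) f g <= \sum_(g | g \notin S) `|f g - h g|.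
  rewrite -sumrB; apply: ler_sum => g _; rewrite distrC; exact: ler_norm.
have fNge : 0 <= \sum_(g | g \notin S) f g by apply: sumr_ge0.
have hNge : 0 <= \sum_(g | g \notin S) h g by apply: sumr_ge0.
have tot : \sum_(g : {set {set 'I_n}}) `|f g - h g| = \sum_(g in S) `|f g - h g| + \sum_(g | g \notin S) `|f g - h g|.
  by rewrite (bigID (mem S)).
have up : \sum_(g : {set {set 'I_n}}) `|f g - h g| <= 2.
  apply: le_trans (_ : \sum_(g : {set {set 'I_n}}) (f g + h g) <= _).
    apply: ler_sum => g _; apply: le_trans (ler_normB _ _) _.
    by rewrite !ger0_norm.
  by rewrite big_split /= h1; lra.
rewrite /TV; apply/andP; split; last by lra.
rewrite tot; lra.
Qed.
End Comb.
Section PF.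
Local Open Scope ereal_scope.
Context d1 d2 (T1 : measurableType d1) (T2 : measurableType d2) (R : realType)
  (m : {measure set T1 -> \bar R}) (f : T1 -> T2).
Definition pfw (mf : measurable_fun [set: T1] f) := fun A => m (f @^-1` A).
Variable mf : measurable_fun [set: T1] f.
Let pfw0 : pfw mf set0 = 0.
Proof. by rewrite /pfw preimage_set0 measure0. Qed.
Let pfw_ge0 A : 0 <= pfw mf A.
Proof. by apply: measure_ge0. Qed.
Let pfw_sa : semi_sigma_additive (pfw mf).
Proof.
move=> F mF tF mUF; rewrite /pfw preimage_bigcup.
apply: measure_semi_sigma_additive.
- by move=> n; rewrite -[X in measurable X]setTI; exact: mf.
- apply/trivIsetP => /= i j _ _ ij; rewrite -preimage_setI.
  by move/trivIsetP : tF => /(_ _ _ _ _ ij) ->//; rewrite preimage_set0.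
- by rewrite -preimage_bigcup -[X in measurable X]setTI; exact: mf.
Qed.
HB.instance Definition _ := isMeasure.Build _ _ _ (pfw mf) pfw0 pfw_ge0 pfw_sa.
End PF.

Section Meas.
Context d d' (T : measurableType d) (Om : measurableType d') (R : realType)
  (P : probability T R) (D : probability Om R) (n : nat) (X : 'I_n -> T -> Om).
Hypothesis hX : iid_sample P D X.

Lemma iid_mX i : measurable_fun setT (X i).
Proof. by case: hX. Qed.

Lemma iid_rect i j (A B : set Om) : i != j -> measurable A -> measurable B ->
  P ((fun t => (X i t, X j t)) @^-1` (A `*` B)) = (D A * D B)%E.
Proof.
move=> ij mA mB; case: hX => _ hlaw hind.
pose F k := if k == i then A else if k == j then B else setT.
have mF k : measurable (F k) by rewrite /F; case: ifP => // _; case: ifP.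
have := hind F mF.
have -> : \bigcap_(k in [set: 'I_n]) (X k @^-1` F k) = (fun t => (X i t, X j t)) @^-1` (A `*` B).
  apply/seteqP; split => t /=.
    move=> h; split.
      by have := h i I; rewrite /F eqxx.
    by have := h j I; rewrite /F eq_sym (negbTE ij) eqxx.
  move=> [tA tB] k _; rewrite /F; case: ifP => [/eqP -> //|_].
  by case: ifP => [/eqP -> //|].
move=> ->.
rewrite (bigD1 i) //= (bigD1 j) //=; last by rewrite eq_sym.
rewrite big1 ?mulr1; last first.
  move=> k /andP[ki kj]; rewrite /F (negbTE ki) (negbTE kj) preimage_setT.
  by rewrite probability_setT.
rewrite /F eqxx eq_sym (negbTE ij) eqxx !hlaw // EFinM !fineK //; exact: fin_num_measure.
Qed.

Lemma iid_joint i j (Z : set (Om * Om)) : i != j -> measurable Z ->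
  P ((fun t => (X i t, X j t)) @^-1` Z) = (D \x D)%E Z.
Proof.
move=> ij mZ.
have mf : measurable_fun setT (fun t => (X i t, X j t)).
  by apply: measurable_fun_pair; apply: iid_mX.
have := @product_measure_unique _ _ Om Om R D D (@pfw _ _ _ _ _ P _ mf).
move=> /(_ _ Z mZ) ->  //.
by move=> A B mA mB; rewrite /pfw /= iid_rect.
Qed.

Lemma meas_big_disj (I : eqType) (s : seq I) (F : I -> set T) : uniq s ->
  (forall i, measurable (F i)) -> (forall i j, i != j -> F i `&` F j = set0) ->
  P (\big[setU/set0]_(i <- s) F i) = (\sum_(i <- s) P (F i))%E.
Proof.
move=> + mF dF; elim: s => [|a s IH] /=; first by rewrite !big_nil measure0.
move=> /andP[aS us]; rewrite !big_cons -IH // measureU //.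
- by apply: bigsetU_measurable => i _.
- elim: s aS {IH us} => [|b s IH2]; first by rewrite big_nil setI0.
  rewrite inE negb_or => /andP[ab aS]; rewrite big_cons setIUr IH2 // dF //.
  by rewrite setU0.
Qed.

Lemma meas_big_sub (I : Type) (s : seq I) (Q : pred I) (F : I -> set T) :
  (forall i, measurable (F i)) ->
  (P (\big[setU/set0]_(i <- s | Q i) F i) <= \sum_(i <- s | Q i) P (F i))%E.
Proof.
move=> mF; elim: s => [|a s IH]; first by rewrite !big_nil measure0.
rewrite !big_cons; case: ifP => // _.
apply: le_trans (measureU2 _ _ _) _ => //.
  by apply: bigsetU_measurable => i _.
exact: leeD2l.
Qed.

Variables (mu : Om -> Om -> R) (tau : R).
Hypothesis hmu : measurable_dist mu.

Definition beta t : {ffun 'I_n * 'I_n -> bool} :=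
  [ffun ij => mu (X ij.1 t) (X ij.2 t) <= tau].

Definition Gr (b : {ffun 'I_n * 'I_n -> bool}) : {set {set 'I_n}} :=
  [set e : {set 'I_n} | [exists i : 'I_n, exists j : 'I_n,
     [&& (i < j)%N, e == [set i; j]%SET & b (i, j)]]].

Lemma rgg_Gr t : rgg_graph mu tau (fun i => X i t) = Gr (beta t).
Proof.
apply/setP => e; rewrite !inE; apply: eq_existsb => i; apply: eq_existsb => j.
by rewrite ffunE.
Qed.

Lemma meas_le_tau i j : measurable [set t | mu (X i t) (X j t) <= tau].
Proof.
have mf : measurable_fun setT (fun t => (X i t, X j t)).
  by apply: measurable_fun_pair; apply: iid_mX.
have := hmu measurableT _ (measurable_itv `]-oo, tau]).
move=> /(mf measurableT); rewrite setTI.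
congr measurable; apply/seteqP; split => t /=; rewrite in_itv /=.
  by case.
by move=> h; split.
Qed.

Lemma meas_beta_pred (Q : pred {ffun 'I_n * 'I_n -> bool}) :
  measurable [set t | Q (beta t)].
Proof.
have Fb b : measurable [set t | beta t = b].
  have -> : [set t | beta t = b] = \bigcap_(ij in [set: 'I_n * 'I_n])
       [set t | (mu (X ij.1 t) (X ij.2 t) <= tau) = b ij].
    apply/seteqP; split => t /=.
      by move=> <- ij _; rewrite ffunE.
    by move=> h; apply/ffunP => ij; rewrite ffunE; exact: h ij I.
  apply: fin_bigcap_measurable; first exact: finite_finset.
  move=> [i j] _ /=; have M := meas_le_tau i j.
  case: (b (i, j)).
    by congr measurable: M; apply/seteqP; split => t /= h; apply/eqP.
  have MC := measurableC M; congr measurable: MC; apply/seteqP; split => t /=.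
    by move=> h; apply/negP.
  by move=> ->.
have -> : [set t | Q (beta t)] = \bigcup_(b in [set b | Q b]) [set t | beta t = b].
  apply/seteqP; split => t /=; first by move=> h; exists (beta t).
  by move=> [b /= Qb tb]; rewrite tb.
apply: fin_bigcup_measurable; first exact: finite_finset.
by move=> b _.
Qed.

Lemma meas_rgg_in (A : pred {set {set 'I_n}}) :
  measurable [set t | rgg_graph mu tau (fun i => X i t) \in A].
Proof.
have := meas_beta_pred (fun b => Gr b \in A).
by congr measurable; apply/seteqP; split => t /=; rewrite rgg_Gr.
Qed.

Lemma sum_rgg (A : {set {set {set 'I_n}}}) :
  \sum_(g in A) rgg_pmf P mu tau X g =
  fine (P [set t | rgg_graph mu tau (fun i => X i t) \in A]).
Proof.
have Ev (g : {set {set 'I_n}}) : measurable [set t | rgg_graph mu tau (fun i => X i t) = g].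
  have := meas_rgg_in (pred1 g).
  by congr measurable; apply/seteqP; split => t /= /eqP.
rewrite /rgg_pmf -big_enum /= sum_fine; last by move=> g _; apply: fin_num_measure.
rewrite -meas_big_disj ?enum_uniq //; last first.
  move=> g h gh; apply/seteqP; split => t //= [-> ht].
  by move: gh; rewrite ht eqxx.
congr (fine (P _)); rewrite -bigcup_seq; apply/seteqP; split => t /=.
  by move=> [g /=]; rewrite mem_enum => gA ->.
by move=> tA; exists (rgg_graph mu tau (fun i => X i t)) => //=; rewrite mem_enum.
Qed.

Lemma meas_band_set (a b : R) :
  measurable [set z : Om * Om | (a <= mu z.1 z.2) && (mu z.1 z.2 <= b)].
Proof.
have := hmu measurableT _ (measurable_itv `[a, b]); rewrite setTI.
by congr measurable; apply/seteqP; split => z /=; rewrite in_itv.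
Qed.

Lemma band_event i j (a b : R) : i != j ->
  fine (P [set t | (a <= mu (X i t) (X j t)) && (mu (X i t) (X j t) <= b)])
  = fine ((D \x D)%E [set z : Om * Om | (a <= mu z.1 z.2) && (mu z.1 z.2 <= b)]).
Proof.
move=> ij; by rewrite (iid_joint _ _ _ ij (meas_band_set a b)).
Qed.

Lemma meas_band i j (a b : R) :
  measurable [set t | (a <= mu (X i t) (X j t)) && (mu (X i t) (X j t) <= b)].
Proof.
have mf : measurable_fun setT (fun t => (X i t, X j t)).
  by apply: measurable_fun_pair; apply: iid_mX.
have := mf measurableT _ (meas_band_set a b); rewrite setTI.
by congr measurable.
Qed.

Lemma good_bound (S : {set {set {set 'I_n}}}) (eps : R) :
  (forall t, (forall i j : 'I_n, (i < j)%N ->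
      ~~ ((tau - 2 * eps <= mu (X i t) (X j t)) && (mu (X i t) (X j t) <= tau + 2 * eps))) ->
    rgg_graph mu tau (fun i => X i t) \in S) ->
  1 - n%:R ^+ 2 * band_prob D mu tau eps <= \sum_(g in S) rgg_pmf P mu tau X g.
Proof.
move=> hS.
pose Bd (ij : 'I_n * 'I_n) := [set t | (tau - 2 * eps <= mu (X ij.1 t) (X ij.2 t))
                                     && (mu (X ij.1 t) (X ij.2 t) <= tau + 2 * eps)].
have mBd ij : measurable (Bd ij) by apply: meas_band.
pose Bad := \big[setU/set0]_(ij : 'I_n * 'I_n | (ij.1 < ij.2)%N) Bd ij.
have mBad : measurable Bad by apply: bigsetU_measurable.
have Bdb (ij : 'I_n * 'I_n) : (ij.1 < ij.2)%N -> fine (P (Bd ij)) = band_prob D mu tau eps.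
  by move=> lt; rewrite /band_prob -(band_event ij.1 ij.2) // neq_ltn lt.
have bge : 0 <= band_prob D mu tau eps by apply: fine_ge0.
have PBad : fine (P Bad) <= n%:R ^+ 2 * band_prob D mu tau eps.
  apply: le_trans (_ : \sum_(ij : 'I_n * 'I_n | (ij.1 < ij.2)%N) fine (P (Bd ij)) <= _).
    rewrite sum_fine; last by move=> ij _; apply: fin_num_measure.
    apply: fine_le; [exact: fin_num_measure| |exact: meas_big_sub].
    by rewrite -EFin_sum_fine // => ij _; apply: fin_num_measure.
  rewrite (eq_bigr (fun _ => band_prob D mu tau eps)); last by move=> ij /Bdb.
  apply: le_trans (_ : \sum_(ij : 'I_n * 'I_n) band_prob D mu tau eps <= _).
    rewrite [X in _ <= X](bigID (fun ij : 'I_n * 'I_n => (ij.1 < ij.2)%N)) /=.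
    by rewrite lerDl sumr_ge0.
  by rewrite sumr_const card_prod card_ord -[_ *+ _]mulr_natl natrM expr2.
rewrite sum_rgg.
have sub : ~` Bad `<=` [set t | rgg_graph mu tau (fun i => X i t) \in S].
  move=> t /= nB; apply: hS => i j ij; apply/negP => hb; apply: nB.
  rewrite /Bad -bigcup_seq_cond; exists (i, j) => //=.
  by rewrite mem_index_enum.
have := le_measure P _ _ sub; rewrite !inE => /(_ (measurableC mBad) (meas_rgg_in _)) h2.
have hC : P (~` Bad) = (1 - P Bad)%E by apply: probability_setC.
have h : (1 - P Bad <= P [set t | rgg_graph mu tau (fun i => X i t) \in S])%E.
  by rewrite -hC; exact: h2.
apply: le_trans (_ : fine (1 - P Bad)%E <= _).
  rewrite fineB ?fin_num_measure //=; lra.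
apply: fine_le; [by rewrite fin_numB fin_num_measure | apply: fin_num_measure; exact: meas_rgg_in | exact: h].
Qed.

Lemma rgg_sum_le1 (A : {set {set {set 'I_n}}}) : \sum_(g in A) rgg_pmf P mu tau X g <= 1.
Proof.
rewrite sum_rgg -[1]/(fine 1%E); apply: fine_le => //.
  by apply: fin_num_measure; apply: meas_rgg_in.
by apply: probability_le1; apply: meas_rgg_in.
Qed.

Lemma rgg_ge0 g : 0 <= rgg_pmf P mu tau X g.
Proof. exact: fine_ge0. Qed.
End Meas.
Section Net.
Context (R : realType) (Om : Type) (mu : Om -> Om -> R) (tau eps : R) (N : seq Om) (x0 : Om) (n : nat).
Hypothesis hmet : is_metric mu.
Hypothesis hnet : is_eps_net mu eps N.

Definition SN : {set {set {set 'I_n}}} :=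
  [set rgg_graph mu tau (fun i => nth x0 N (f i)) | f : {ffun 'I_n -> 'I_(size N)}].

Lemma card_SN : (#|SN| <= size N ^ n)%N.
Proof.
apply: leq_trans (leq_imset_card _ _) _.
by rewrite card_ffun !card_ord.
Qed.

Lemma In_nth_ssr (y : Om) (s : seq Om) : List.In y s -> exists k : 'I_(size s), nth x0 s k = y.
Proof.
elim: s => [//|a s IH] /= [->|/IH [k hk]].
  by exists ord0.
by exists (lift ord0 k).
Qed.

Lemma in_SN (x : 'I_n -> Om) :
  (forall i j : 'I_n, (i < j)%N ->
      ~~ ((tau - 2 * eps <= mu (x i) (x j)) && (mu (x i) (x j) <= tau + 2 * eps))) ->
  rgg_graph mu tau x \in SN.
Proof.
move=> good.
case: hmet => mu0 _ musym mutri.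
have : forall i : 'I_n, exists k : 'I_(size N), mu (x i) (nth x0 N k) <= eps.
  move=> i; have [y [yN hy]] := hnet (x i).
  by have [k hk] := In_nth_ssr _ _ yN; exists k; rewrite hk.
move=> /fin_all_exists [f hf].
apply/imsetP; exists (finfun f) => //.
apply/setP => e; rewrite !inE; apply: eq_existsb => i; apply: eq_existsb => j.
rewrite !ffunE.
case ij: (i < j)%N => //=; congr (_ && _).
have e0 : 0 <= eps by apply: le_trans (hf i); apply: mu0.
set yi := nth x0 N (f i); set yj := nth x0 N (f j).
have h1 : mu yi yj <= mu (x i) (x j) + 2 * eps.
  have := mutri yi (x i) yj; have := mutri (x i) (x j) yj.
  have := hf i; have := hf j; rewrite -/yi -/yj (musym yi (x i)); lra.
have h2 : mu (x i) (x j) <= mu yi yj + 2 * eps.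
  have := mutri (x i) yi (x j); have := mutri yi yj (x j).
  have := hf i; have := hf j; rewrite -/yi -/yj (musym yj (x j)); lra.
have := good i j ij; rewrite negb_and -!ltNge => /orP[h|h].
  by apply/esym; apply/idP/idP => _; lra.
by apply/esym; apply/idP/idP => H; lra.
Qed.
End Net.

Section Key.
Variable R : realType.

Lemma nat_sq_bin n : (2 <= n)%N -> (n * n <= 4 * 'C(n, 2))%N.
Proof.
move=> n2; have h := mul_bin_diag n 1; rewrite bin1 in h.
have -> : (4 * 'C(n, 2) = 2 * (2 * 'C(n, 2)))%N by rewrite mulnA.
rewrite -h; case: n n2 {h} => [|[|m]] // _ /=; nia.
Qed.

Lemma key dT d' (T : measurableType dT) (Om : measurableType d')
  (mu : Om -> Om -> R) (D : probability Om R) (tau eps : R) (N : seq Om)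
  (P : probability T R) (n : nat) (X : 'I_n -> T -> Om) :
  is_metric mu -> measurable_dist mu -> is_eps_net mu eps N -> iid_sample P D X ->
  (2 <= n)%N ->
  n%:R^-1 <= edge_prob D mu tau <= 2^-1 ->
  (size N)%:R <= expR (32^-1 * n%:R * edge_prob D mu tau * ln (edge_prob D mu tau)^-1) ->
  1 - (n%:R ^+ 2 * band_prob D mu tau eps + 160 * harmonic n)
    <= TV (rgg_pmf P mu tau X) (gnp_pmf n (edge_prob D mu tau)) <= 1.
Proof.
move=> hmet hmeas hnet hiid n2 /andP[pl pu] hsz.
set p := edge_prob D mu tau in pl pu hsz *.
have x2 : 2 <= n%:R :> R by rewrite (ler_nat R 2).
have x0 : 0 < n%:R :> R by lra.
have p0 : 0 < p by apply: lt_le_trans pl; rewrite invr_gt0.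
have q0 : 0 < 1 - p by lra.
have q20 : 0 < 1 - p / 2 by lra.
pose S := SN _ _ mu tau N point n.
have H1 : forall g, 0 <= rgg_pmf P mu tau X g by move=> g; apply: rgg_ge0.
have H2 : forall A : {set {set {set 'I_n}}}, \sum_(g in A) rgg_pmf P mu tau X g <= 1.
  by move=> A; exact: (@rgg_sum_le1 _ _ _ _ _ P D n X hiid mu tau hmeas A).
have H3 : forall g, 0 <= gnp_pmf n p g by move=> g; apply: gnp_ge0; lra.
have := @tv_bounds _ n _ _ S H1 H2 H3 (gnp_sum1 _ n p) => /andP[lo up].
apply/andP; split => //.
have fS : 1 - n%:R ^+ 2 * band_prob D mu tau eps <= \sum_(g in S) rgg_pmf P mu tau X g.
  apply: good_bound => // t ht.
  by apply: in_SN => //.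
have hS : \sum_(g in S) gnp_pmf n p g <= 80 / n%:R.
  apply: le_trans (@gnp_setS _ n p ('C(n, 2)%:R * p / 4) S p0 pu) _.
  rewrite (@exprE _ (1 - p) _ q0) (@exprE _ (1 - p / 2) _ q20).
  apply: asym_real => //.
  - by rewrite expr2 -!natrM ler_nat nat_sq_bin.
  - have cS := card_SN _ _ mu tau N point n.
    apply: le_trans (_ : (size N)%:R ^+ n <= _).
      by rewrite -natrX ler_nat.
    rewrite expRM_natl; apply: lerXn2r => //; rewrite ?nnegrE ?ler0n ?expR_ge0 //.
have hh : 80 / n%:R <= 160 * harmonic n :> R.
  rewrite /= -addn1 natrD.
  rewrite ler_pdivlMr // mulrAC ler_pdivrMr //; lra.
apply: le_trans lo; lra.
Qed.
End Key.

Notation R := Rdefinitions.R (only parsing).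

Theorem mainTheorem20 :
  exists C : R, 0 < C /\
  forall (dO : nat -> measure_display) (Om : forall n, measurableType (dO n))
    (mu : forall n, Om n -> Om n -> R) (D : forall n, probability (Om n) R)
    (tau eps : nat -> R) (N : forall n, seq (Om n)),
  (forall n, is_metric (mu n)) ->
  (forall n, measurable_dist (mu n)) ->
  (forall n, 0 <= tau n) ->
  (forall n, is_eps_net (mu n) (eps n) (N n)) ->
  (\forall n \near \oo, n%:R^-1 <= edge_prob (D n) (mu n) (tau n)
                        <= 2^-1) ->
  ((fun n => n%:R ^+ 2 * band_prob (D n) (mu n) (tau n) (eps n)) @ \oo --> (0 : R)) ->
  (\forall n \near \oo,
      (size (N n))%:R <= expR (C * n%:R * edge_prob (D n) (mu n) (tau n)
                                * ln (edge_prob (D n) (mu n) (tau n))^-1)) ->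
  forall (dT : nat -> measure_display) (T : forall n, measurableType (dT n))
    (P : forall n, probability (T n) R) (X : forall n, 'I_n -> T n -> Om n),
  (forall n, iid_sample (P n) (D n) (X n)) ->
  (fun n => TV (rgg_pmf (P n) (mu n) (tau n) (X n))
               (gnp_pmf n (edge_prob (D n) (mu n) (tau n)))) @ \oo --> (1 : R).
Proof.
exists (32^-1); split; first by rewrite invr_gt0 ltr0n.
move=> dO Om mu D tau eps N hmet hmeas htau hnet hp hband hsize dT T P X hiid.
have L : (fun n => 1 - (n%:R ^+ 2 * band_prob (D n) (mu n) (tau n) (eps n) + 160 * harmonic n)) @ \oo --> (1 : R).
  rewrite -[X in _ --> X](subr0 (1 : R)).
  apply: cvgB; first exact: cvg_cst.
  rewrite -[X in _ --> X](addr0 (0 : R)).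
  apply: cvgD; first exact: hband.
  rewrite -[X in _ --> X](mulr0 (160 : R)).
  apply: cvgM; first exact: cvg_cst.
  exact: cvg_harmonic.
apply: (squeeze_cvgr _ L (cvg_cst (1 : R))).
near=> n.
have n2 : (2 <= n)%N by near: n; exact: nbhs_infty_ge.
have hpn : n%:R^-1 <= edge_prob (D n) (mu n) (tau n) <= 2^-1 by near: n; exact: hp.
have hsn : (size (N n))%:R <= expR (32^-1 * n%:R * edge_prob (D n) (mu n) (tau n)
                                * ln (edge_prob (D n) (mu n) (tau n))^-1).
  by near: n; exact: hsize.
exact: key.
Unshelve. all: end_near.
Qed.
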